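(* Let $(N^\circ,M^\circ,L^\circ)\in OLag(V)^3$ be pairwise in general position, let $r^L:M\to N$ be the linear map with $r^L(m)-m\in L$ for all $m\in M$, and $r^L_\wedge:\bigwedge^nM\to\bigwedge^nN$ the induced map. Then $$\omega_\wedge\big(r^L_\wedge(o_M),o_M\big)=(-1)^n\,\omega_\wedge(o_M,o_N)\,\omega_\wedge(o_L,o_M)\,\omega_\wedge(o_L,o_N)^{-1}.$$
   Context: $(V,\omega)$ is a symplectic vector space of dimension $2n$ over $\mathbb F_q$, $q$ odd. An oriented Lagrangian is a pair $L^\circ=(L,o_L)$ with $L$ Lagrangian and $o_L\in\bigwedge^nL$ nonzero; $OLag(V)$ is the set of these. Lagrangians $M,L$ are in general position if $M+L=V$. For Lagrangians $A,B$ in a $2k$-dimensional symplectic space, $\omega_\wedge:\bigwedge^kA\times\bigwedge^kB\to\mathbb F_q$ is $\omega_\wedge(a_1\wedge\dots\wedge a_k,b_1\wedge\dots\wedge b_k)=(-1)^{k(k-1)/2}\det(\omega(a_i,b_j))_{i,j}$. *)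

(* Defs.v *)
From HB Require Import structures.
From mathcomp Require Import all_boot all_order all_algebra all_field.
Set Implicit Arguments. Unset Strict Implicit. Unset Printing Implicit Defensive.
Import GRing.Theory.
Local Open Scope ring_scope.

(* The symplectic space V of dimension 2n is modelled as row vectors
   'rV[F]_(n + n); the symplectic form is omega Om u v := u Om v^T where Om
   is an invertible antisymmetric matrix (alternating, since char F <> 2). *)
Definition omega (F : fieldType) (n : nat) (Om : 'M[F]_(n + n))
  (u v : 'rV[F]_(n + n)) : F := (u *m Om *m v^T) 0 0.

Definition symplectic_form (F : fieldType) (n : nat) (Om : 'M[F]_(n + n)) : bool :=
  (Om^T == - Om) && (Om \in unitmx).

(* An oriented Lagrangian (L, o_L) is represented by an ordered basis
   A (the rows of A) of L, with o_L = a_1 /\ ... /\ a_n.  L is the row space. *)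
Definition is_olag (F : fieldType) (n : nat) (Om : 'M[F]_(n + n))
  (A : 'M[F]_(n, n + n)) : bool :=
  row_free A && [forall i, forall j, omega Om (row i A) (row j A) == 0].

Definition gen_pos (F : fieldType) (n : nat) (A B : 'M[F]_(n, n + n)) : bool :=
  ((A + B)%MS == 1%:M)%MS.

Definition omega_wedge (F : fieldType) (n : nat) (Om : 'M[F]_(n + n))
  (A B : 'M[F]_(n, n + n)) : F :=
  (-1) ^+ (n * (n - 1) %/ 2) *
  \det (\matrix_(i < n, j < n) omega Om (row i A) (row j B)).

(* r_wedge (m_1/\../\m_n) = r m_1 /\ ... /\ r m_n, represented by its rows *)
Definition wedge_map (F : fieldType) (n : nat)
  (r : 'rV[F]_(n + n) -> 'rV[F]_(n + n)) (A : 'M[F]_(n, n + n)) : 'M[F]_(n, n + n) :=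
  \matrix_(i < n) r (row i A).

(* Main.v *)
Require Import Defs.
From HB Require Import structures.
From mathcomp Require Import all_boot all_order all_algebra all_field.
Import GRing.Theory.
Local Open Scope ring_scope.

Lemma omega_mx (F : fieldType) n (Om : 'M[F]_(n + n)) (A B : 'M[F]_(n, n + n)) :
  \matrix_(i < n, j < n) omega Om (row i A) (row j B) = A *m Om *m B^T.
Proof.
apply/matrixP => i j; rewrite !mxE /omega -row_mul !mxE.
by apply: eq_bigr => k _; rewrite !mxE.
Qed.

Lemma detNmx (F : fieldType) n (A : 'M[F]_n) : \det (- A) = (-1) ^+ n * \det A.
Proof. by rewrite -scaleN1r detZ. Qed.

Lemma mulmx4 {F : fieldType} {a b c d e f : nat} (X : 'M[F]_(a, b)) (A : 'M[F]_(b, c))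
  (B : 'M[F]_(c, d)) (D : 'M[F]_(d, e)) (Y : 'M[F]_(e, f)) :
  X *m A *m B *m D *m Y = X *m (A *m B *m D) *m Y.
Proof. by rewrite !mulmxA. Qed.

Lemma alg (R: comNzRingType) (s t a b c: R): t*t = 1 ->
  s*(a*b*c)*(s*b) = t*(s*(t*(c*b)))*(s*(b*a)).
Proof.
move=> tt. rewrite [t * (s * _)]mulrCA [t * (t * _)]mulrA tt mul1r.
rewrite -!mulrA; congr (_ * _).
by rewrite (mulrC b a) (mulrCA s a) (mulrCA b a) (mulrCA c a) (mulrCA c b).
Qed.
Lemma sq (R: pzRingType) k : (-1) ^+ k * (-1) ^+ k = 1 :> R.
Proof. by rewrite -exprD -signr_odd oddD addbb. Qed.

Theorem mainTheorem4 (F : finFieldType) (n : nat) (Om : 'M[F]_(n + n))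
  (No Mo Lo : 'M[F]_(n, n + n))
  (r : {linear 'rV[F]_(n + n) -> 'rV[F]_(n + n)}) :
  odd #|F| ->
  symplectic_form Om ->
  is_olag Om No -> is_olag Om Mo -> is_olag Om Lo ->
  gen_pos No Mo -> gen_pos Mo Lo -> gen_pos No Lo ->
  (forall m : 'rV[F]_(n + n), (m <= Mo)%MS ->
     (r m <= No)%MS /\ (r m - m <= Lo)%MS) ->
  omega_wedge Om (wedge_map r Mo) Mo =
  (-1) ^+ n * omega_wedge Om Mo No * omega_wedge Om Lo Mo
    * (omega_wedge Om Lo No)^-1.
Proof.
move=> _ /andP[/eqP OmT _] /andP[_ /forallP HN] _ /andP[_ /forallP HL] _ _ _ Hr.
have NN : No *m Om *m No^T = 0.
  rewrite -omega_mx; apply/matrixP => i j; rewrite !mxE.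
  by apply/eqP; have /forallP := HN i; apply.
set rM := wedge_map r Mo.
have [C hC] : exists C, rM = C *m No.
  apply/submxP/row_subP => i; rewrite rowK.
  by have [] := Hr _ (row_sub i Mo).
have [E hE] : exists E, rM - Mo = E *m Lo.
  apply/submxP/row_subP => i; rewrite linearB /= rowK.
  by have [] := Hr _ (row_sub i Mo).
have hM : Mo = C *m No - E *m Lo by rewrite -hC -hE opprB addrC subrK.
set K := Lo *m Om *m No^T.
have hNL : No *m Om *m Lo^T = - K^T.
  by rewrite /K !trmx_mul trmxK OmT mulNmx mulmxN opprK mulmxA.
have trB (A B : 'M[F]_(n, n + n)) : (A - B)^T = A^T - B^T by rewrite linearB.
have LL : Lo *m Om *m Lo^T = 0.
  rewrite -omega_mx; apply/matrixP => i j; rewrite !mxE.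
  by apply/eqP; have /forallP := HL i; apply.
have h1 : C *m No *m Om *m (C *m No - E *m Lo)^T = - (C *m (No *m Om *m Lo^T) *m E^T).
  rewrite trB !trmx_mul mulmxBr !mulmxA (mulmx4 C No Om No^T C^T).
  by rewrite (mulmx4 C No Om Lo^T E^T) NN mulmx0 mul0mx sub0r.
rewrite hNL mulmxN mulNmx opprK in h1.
have h2 : (C *m No - E *m Lo) *m Om *m No^T = - (E *m K).
  by rewrite mulmxBl mulmxBl -!mulmxA (mulmxA No Om) (mulmxA Lo Om) NN mulmx0 sub0r.
have h3 : Lo *m Om *m (C *m No - E *m Lo)^T = K *m C^T.
  rewrite trB !trmx_mul mulmxBr !mulmxA LL mul0mx subr0 //.
rewrite /omega_wedge !omega_mx hC hM h1 h2 h3 -/K.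
rewrite detNmx !det_mulmx !det_tr.
set s := (-1) ^+ _; set t := (-1) ^+ n.
have [dK0|dK0] := eqVneq (\det K) 0.
  by rewrite dK0 !(mulr0, mul0r, invr0).
have sK : s * \det K != 0 by rewrite mulf_neq0 // signr_eq0.
apply: (mulIf sK); rewrite divfK //.
exact: alg (sq _ _).
Qed.
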